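(* In the network described in the context with homogeneous all-to-all coupling $\varepsilon_{ij}=(1-\delta_{ij})\varepsilon$, $\varepsilon>0$, $(N-1)\varepsilon<1$, a neuronal partial reset function $R$ and a strictly convex rise function $U$ ($U''>0$), the asynchronous periodic (splay) state exists and is linearly stable.
   Context: Model: $N$ units with phases $\phi_i$. A rise function is a smooth $U:[0,\infty)\to[0,\infty)$ with $U'>0$, $U(0)=0$, $U(1)=1$. A partial reset function is a monotonically increasing $R:\mathbb{R}\to\mathbb{R}$ with $R(0)=0$; neuronal if $0\le R(\zeta)\le\zeta$ for $\zeta\ge0$. $H_\varepsilon(\phi)=U^{-1}(U(\phi)+\varepsilon)$, $J_\varepsilon(\phi)=U^{-1}(R(U(\phi)+\varepsilon-1))$. Dynamics: $\varepsilon_{ij}$ is the pulse strength from unit $j$ to unit $i$. Between events phases increase at unit rate. When at time $t$ the set $\Theta^{(0)}=\{j:\phi_j(t^-)=1\}$ is nonempty an avalanche occurs: with $u_i^{(0)}=U(\phi_i(t^-))$, $u_i^{(k+1)}=u_i^{(k)}+\sum_{j\in\Theta^{(k)}}\varepsilon_{ij}$, $\Theta^{(k+1)}=\{i:u_i^{(k)}<1\le u_i^{(k+1)}\}$ until empty, $\Theta=\bigcup_k\Theta^{(k)}$; then $\phi_i(t^+)=H_{\sum_{j\in\Theta}\varepsilon_{ij}}(\phi_i(t^-))$ for $i\notin\Theta$ and $\phi_i(t^+)=J_{\sum_{j\in\Theta}\varepsilon_{ij}}(\phi_i(t^-))$ for $i\in\Theta$. The return map sends the state just before a fixed reference unit fires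 to the state just before it fires next. An asynchronous periodic (splay) state is a state invariant under the return map in which every avalanche has size $1$. Linear stability means that, to first order, small phase perturbations tend to zero under iteration of the return map. *)

(* Defs.v *)
From Stdlib Require Import Reals Lra ClassicalEpsilon.
Open Scope R_scope.

(* A network state: phase of unit i (only indices i < N are meaningful). *)
Definition state := nat -> R.

Fixpoint sumN (n : nat) (f : nat -> R) : R :=
  match n with O => 0 | S n' => sumN n' f + f n' end.

Definition decP (P : Prop) : bool :=
  if excluded_middle_informative P then true else false.

(* Rise function U (given together with its sequence of derivatives D,
   D 0 = U, D (n+1) = (D n)'): smooth, U' > 0 on [0,oo), U 0 = 0, U 1 = 1. *)
Definition is_rise_function (U : R -> R) (D : nat -> R -> R) : Prop :=
  (forall x, D O x = U x) /\
  (forall n x, derivable_pt_lim (D n) x (D (S n) x)) /\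
  (forall x, 0 <= x -> 0 < D 1%nat x) /\
  U 0 = 0 /\ U 1 = 1.

Definition is_partial_reset (Rf : R -> R) : Prop :=
  (forall a b, a <= b -> Rf a <= Rf b) /\ Rf 0 = 0.

Definition is_neuronal (Rf : R -> R) : Prop :=
  forall z, 0 <= z -> 0 <= Rf z /\ Rf z <= z.

Definition homog (e : R) (i j : nat) : R := if Nat.eqb i j then 0 else e.

(* Avalanche: step k gives (u^(k), Theta^(k)) for the pre-event state x. *)
Fixpoint aval (N : nat) (eps : nat -> nat -> R) (U : R -> R) (x : state) (k : nat)
  : (nat -> R) * (nat -> bool) :=
  match k with
  | O => (fun i => U (x i), fun i => decP (x i = 1))
  | S k' =>
      let (u, th) := aval N eps U x k' in
      let u' := fun i => u i + sumN N (fun j => if th j then eps i j else 0) in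
      (u', fun i => decP (u i < 1 <= u' i))
  end.

Definition theta N eps U x k : nat -> bool := snd (aval N eps U x k).

Definition in_aval N eps U (x : state) (i : nat) : Prop :=
  exists k, theta N eps U x k i = true.

Definition received N eps U (x : state) (i : nat) : R :=
  sumN N (fun j => if decP (in_aval N eps U x j) then eps i j else 0).

(* One event: x = state at t^-, y = state at t^+.
   y_i = H_s(x_i) = U^{-1}(U(x_i)+s) for i not in Theta,
   y_i = J_s(x_i) = U^{-1}(R(U(x_i)+s-1)) for i in Theta,
   with U^{-1} the inverse of U on [0,oo). *)
Definition event N eps U (Rf : R -> R) (x y : state) : Prop :=
  (exists j, (j < N)%nat /\ x j = 1) /\
  forall i, (i < N)%nat ->
    0 <= y i /\
    (in_aval N eps U x i -> U (y i) = Rf (U (x i) + received N eps U x i - 1)) /\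
    (~ in_aval N eps U x i -> U (y i) = U (x i) + received N eps U x i).

Definition flow N (y z : state) : Prop :=
  exists tau, 0 <= tau /\
    (forall i, (i < N)%nat -> z i = y i + tau) /\
    (forall i, (i < N)%nat -> z i <= 1) /\
    (exists j, (j < N)%nat /\ z j = 1).

Definition valid_state N (x : state) : Prop :=
  forall i, (i < N)%nat -> 0 <= x i <= 1.

Definition pre_fire N eps U r (x : state) : Prop :=
  valid_state N x /\ in_aval N eps U x r.

(* p k: pre-event states, q k: post-event states; p m is the state just before
   r fires next. *)
Definition return_orbit N eps U Rf r (x : state) (m : nat) (p q : nat -> state) : Prop :=
  (0 < m)%nat /\ p O = x /\
  (forall k, (k < m)%nat -> event N eps U Rf (p k) (q k) /\ flow N (q k) (p (S k))) /\
  in_aval N eps U (p m) r /\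
  (forall k, (0 < k)%nat -> (k < m)%nat -> ~ in_aval N eps U (p k) r).

Definition return_map N eps U Rf r (x y : state) : Prop :=
  pre_fire N eps U r x /\
  exists m p q, return_orbit N eps U Rf r x m p q /\
    forall i, (i < N)%nat -> y i = p m i.

Definition avalanche_size_one N eps U (x : state) : Prop :=
  exists j, (j < N)%nat /\ forall i, (i < N)%nat -> (in_aval N eps U x i <-> i = j).

Definition splay_state N eps U Rf r (x : state) : Prop :=
  pre_fire N eps U r x /\
  exists m p q, return_orbit N eps U Rf r x m p q /\
    (forall i, (i < N)%nat -> p m i = x i) /\
    (forall k, (k < m)%nat -> avalanche_size_one N eps U (p k)).

Definition matvec N (M : nat -> nat -> R) (v : state) : state :=
  fun i => sumN N (fun j => M i j * v j).

Definition norm1 N (h : state) : R := sumN N (fun j => Rabs (h j)).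

(* Linear stability: the return map is (Frechet) differentiable at xs on the
   section {x_r = 1} with derivative M, and iterates of M send every
   perturbation to 0. *)
Definition linearly_stable N eps U Rf r (xs : state) : Prop :=
  exists M : nat -> nat -> R,
    (forall e, 0 < e -> exists d, 0 < d /\
       forall h : state, h r = 0 -> (forall i, (i < N)%nat -> Rabs (h i) < d) ->
         exists y, return_map N eps U Rf r (fun i => xs i + h i) y /\
           forall i, (i < N)%nat -> Rabs (y i - xs i - matvec N M h i) <= e * norm1 N h) /\
    (forall v : state, v r = 0 -> forall i, (i < N)%nat ->
       Un_cv (fun k => Nat.iter k (matvec N M) v i) 0).

(* Main.v *)
Require Import Defs.
From Stdlib Require Import Reals Lra Lia ClassicalEpsilon FunctionalExtensionality Ranalysis5.
Open Scope R_scope.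

Definition Uinv (U : R -> R) (v : R) : R :=
  epsilon (inhabits 0) (fun x => 0 <= x /\ U x = v).
Definition Hf (U : R -> R) (e t : R) : R := Uinv U (U t + e).

Lemma U_der U D : is_rise_function U D -> forall x, derivable_pt_lim U x (D 1%nat x).
Proof.
  intros [h0 [hd _]] x.
  assert (E : D O = U) by (apply functional_extensionality; auto).
  rewrite <- E. apply hd.
Qed.

Lemma D1_incr U D : is_rise_function U D -> (forall x, 0 <= x -> 0 < D 2%nat x) ->
  forall a b, 0 <= a -> a < b -> D 1%nat a < D 1%nat b.
Proof.
  intros hU hc a b ha hab.
  destruct hU as [_ [hd _]].
  destruct (MVT_cor2 (D 1%nat) (D 2%nat) a b hab (fun c _ => hd 1%nat c)) as [c [Hc1 Hc2]].
  assert (0 < D 2%nat c) by (apply hc; lra).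
  assert (0 < D 2%nat c * (b - a)) by (apply Rmult_lt_0_compat; lra). lra.
Qed.

Lemma U_incr U D : is_rise_function U D ->
  forall a b, 0 <= a -> a < b -> U a < U b.
Proof.
  intros hU a b ha hab.
  destruct (MVT_cor2 U (D 1%nat) a b hab (fun c _ => U_der U D hU c)) as [c [Hc1 Hc2]].
  destruct hU as [_ [_ [hp _]]].
  assert (0 < D 1%nat c) by (apply hp; lra).
  assert (0 < D 1%nat c * (b - a)) by (apply Rmult_lt_0_compat; lra). lra.
Qed.

Lemma U_le U D : is_rise_function U D ->
  forall a b, 0 <= a -> 0 <= b -> U a <= U b -> a <= b.
Proof.
  intros hU a b ha hb h. destruct (Rle_lt_dec a b); auto.
  assert (U b < U a) by (apply (U_incr U D); auto). lra.
Qed.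

Lemma U_lt U D : is_rise_function U D ->
  forall a b, 0 <= a -> 0 <= b -> U a < U b -> a < b.
Proof.
  intros hU a b ha hb h. destruct (Rlt_le_dec a b); auto.
  destruct (Req_dec a b). subst; lra.
  assert (U b < U a) by (apply (U_incr U D); auto; lra). lra.
Qed.

Lemma U_inj U D : is_rise_function U D ->
  forall a b, 0 <= a -> 0 <= b -> U a = U b -> a = b.
Proof.
  intros. apply Rle_antisym; apply (U_le U D); auto; lra.
Qed.

Lemma U0 U D : is_rise_function U D -> U 0 = 0.
Proof. intros [_ [_ [_ [h _]]]]; auto. Qed.
Lemma U1 U D : is_rise_function U D -> U 1 = 1.
Proof. intros [_ [_ [_ [_ h]]]]; auto. Qed.

Lemma U_nonneg U D : is_rise_function U D -> forall x, 0 <= x -> 0 <= U x.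
Proof.
  intros hU x hx. destruct (Req_dec x 0). subst; rewrite (U0 U D hU); lra.
  rewrite <- (U0 U D hU). left. apply (U_incr U D); auto; lra.
Qed.

Lemma U_cont U D : is_rise_function U D -> forall x, continuity_pt U x.
Proof.
  intros hU x. apply (derivable_continuous_pt U x (exist _ (D 1%nat x) (U_der U D hU x))).
Qed.

Lemma U_lower U D : is_rise_function U D -> (forall x, 0 <= x -> 0 < D 2%nat x) ->
  forall x, 0 <= x -> D 1%nat 0 * x <= U x.
Proof.
  intros hU hc x hx. destruct (Req_dec x 0). subst. rewrite (U0 U D hU); lra.
  destruct (MVT_cor2 U (D 1%nat) 0 x ltac:(lra) (fun c _ => U_der U D hU c)) as [c [Hc1 Hc2]].
  assert (D 1%nat 0 < D 1%nat c) by (apply (D1_incr U D hU hc); lra).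
  rewrite (U0 U D hU) in Hc1.
  assert (D 1%nat 0 * x <= D 1%nat c * x) by (apply Rmult_le_compat_r; lra). lra.
Qed.

Lemma Uinv_ex U D : is_rise_function U D -> (forall x, 0 <= x -> 0 < D 2%nat x) ->
  forall v, 0 <= v -> exists x, 0 <= x /\ U x = v.
Proof.
  intros hU hc v hv. destruct (Req_dec v 0). exists 0; subst; split; [lra|apply (U0 U D hU)].
  assert (hd0 : 0 < D 1%nat 0) by (destruct hU as [_ [_ [hp _]]]; apply hp; lra).
  set (y := v / D 1%nat 0 + 1).
  assert (hy : 0 < y). { unfold y. assert (0 <= v / D 1%nat 0) by (unfold Rdiv; apply Rmult_le_pos; [lra | left; apply Rinv_0_lt_compat; lra]). lra. }
  assert (Hy : D 1%nat 0 * y <= U y) by (apply (U_lower U D hU hc); lra).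
  assert (E : D 1%nat 0 * y = v + D 1%nat 0) by (unfold y; field; lra).
  destruct (IVT_interv (fun s => U s - v) 0 y) as [z [Hz1 Hz2]].
  - intros a _. apply continuity_pt_minus. apply (U_cont U D hU). apply continuity_pt_const. intros ? ?; auto.
  - auto.
  - rewrite (U0 U D hU); lra.
  - lra.
  - exists z; split; lra.
Qed.

Lemma Uinv_spec U D : is_rise_function U D -> (forall x, 0 <= x -> 0 < D 2%nat x) ->
  forall v, 0 <= v -> 0 <= Uinv U v /\ U (Uinv U v) = v.
Proof.
  intros hU hc v hv. unfold Uinv. apply epsilon_spec. apply (Uinv_ex U D hU hc v hv).
Qed.

Lemma Uinv_unique U D : is_rise_function U D -> (forall x, 0 <= x -> 0 < D 2%nat x) ->
  forall x v, 0 <= x -> U x = v -> Uinv U v = x.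
Proof.
  intros hU hc x v hx hxv.
  assert (hv : 0 <= v) by (rewrite <- hxv; apply (U_nonneg U D hU); auto).
  destruct (Uinv_spec U D hU hc v hv) as [h1 h2].
  apply (U_inj U D hU); auto; congruence.
Qed.


Lemma Uinv_mono U D : is_rise_function U D -> (forall x, 0 <= x -> 0 < D 2%nat x) ->
  forall a b, 0 <= a -> a <= b -> Uinv U a <= Uinv U b.
Proof.
  intros hU hc a b ha hab.
  destruct (Uinv_spec U D hU hc a ha) as [h1 h2].
  destruct (Uinv_spec U D hU hc b ltac:(lra)) as [h3 h4].
  apply (U_le U D hU); auto; lra.
Qed.

Lemma Uinv_cont U D : is_rise_function U D -> (forall x, 0 <= x -> 0 < D 2%nat x) ->
  forall v, 0 < v -> continuity_pt (Uinv U) v.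
Proof.
  intros hU hc v hv.
  destruct (Uinv_spec U D hU hc (v+1) ltac:(lra)) as [h1 h2].
  assert (hub : 0 < Uinv U (v+1)).
  { assert (Uinv U (v+1) <> 0). { intro h0. rewrite h0, (U0 U D hU) in h2. lra. } lra. }
  apply (continuity_pt_recip_interv U (Uinv U) 0 (Uinv U (v+1)) hub).
  - intros x y hx hxy hy. apply (U_incr U D hU); auto.
  - intros x hx1 hx2. unfold comp, id. rewrite (U0 U D hU) in hx1.
    apply (Uinv_spec U D hU hc x hx1).
  - intros x hx1 hx2. rewrite (U0 U D hU) in hx1. rewrite h2 in hx2.
    split. apply (Uinv_spec U D hU hc x hx1).
    apply (Uinv_mono U D hU hc); auto.
  - intros a _. apply (U_cont U D hU).
  - rewrite (U0 U D hU), h2. lra.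
Qed.

Lemma Uinv_der U D : is_rise_function U D -> (forall x, 0 <= x -> 0 < D 2%nat x) ->
  forall v, 0 < v -> derivable_pt_lim (Uinv U) v (1 / D 1%nat (Uinv U v)).
Proof.
  intros hU hc v hv.
  set (Prf := fun a (_ : Uinv U (v/2) <= a <= Uinv U (v+1)) =>
                exist (fun l => derivable_pt_abs U a l) (D 1%nat a) (U_der U D hU a)).
  assert (Pi : Uinv U (v/2) <= Uinv U v <= Uinv U (v+1)).
  { split; apply (Uinv_mono U D hU hc); lra. }
  assert (E : derive_pt U (Uinv U v) (Prf (Uinv U v) Pi) = D 1%nat (Uinv U v)).
  { apply derive_pt_eq_0. apply (U_der U D hU). }
  rewrite <- E.
  apply (derivable_pt_lim_recip_interv U (Uinv U) (v/2) (v+1) v Prf).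
  - apply (Uinv_cont U D hU hc v hv).
  - lra.
  - lra.
  - intros x hx. unfold comp, id. apply (Uinv_spec U D hU hc x). lra.
  - rewrite E. destruct hU as [a [b [hp c]]]. apply Rgt_not_eq. apply hp.
    apply (Uinv_spec U D (conj a (conj b (conj hp c))) hc v); lra.
Qed.

Definition hp (U : R -> R) (D : nat -> R -> R) e t := D 1%nat t / D 1%nat (Hf U e t).

Lemma Hf_spec U D e : is_rise_function U D -> (forall x, 0 <= x -> 0 < D 2%nat x) -> 0 < e ->
  forall t, 0 <= t -> 0 <= Hf U e t /\ U (Hf U e t) = U t + e.
Proof.
  intros hU hc he t ht. unfold Hf. apply (Uinv_spec U D hU hc).
  assert (0 <= U t) by (apply (U_nonneg U D hU); auto). lra.
Qed.

Lemma Hf_gt U D e : is_rise_function U D -> (forall x, 0 <= x -> 0 < D 2%nat x) -> 0 < e ->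
  forall t, 0 <= t -> t < Hf U e t.
Proof.
  intros hU hc he t ht. destruct (Hf_spec U D e hU hc he t ht) as [h1 h2].
  apply (U_lt U D hU); auto. lra.
Qed.

Lemma Hf_mono U D e : is_rise_function U D -> (forall x, 0 <= x -> 0 < D 2%nat x) -> 0 < e ->
  forall a b, 0 <= a -> a <= b -> Hf U e a <= Hf U e b.
Proof.
  intros hU hc he a b ha hab.
  destruct (Hf_spec U D e hU hc he a ha) as [h1 h2].
  destruct (Hf_spec U D e hU hc he b ltac:(lra)) as [h3 h4].
  apply (U_le U D hU); auto.
  destruct (Req_dec a b). subst; lra.
  assert (U a < U b) by (apply (U_incr U D hU); lra). lra.
Qed.

Lemma Hf_der U D e : is_rise_function U D -> (forall x, 0 <= x -> 0 < D 2%nat x) -> 0 < e ->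
  forall t, 0 <= t -> derivable_pt_lim (Hf U e) t (hp U D e t).
Proof.
  intros hU hc he t ht.
  assert (Ut : 0 <= U t) by (apply (U_nonneg U D hU); auto).
  assert (E : Hf U e = comp (Uinv U) (fun s => U s + e)).
  { apply functional_extensionality; intro; reflexivity. }
  rewrite E. unfold hp.
  replace (D 1%nat t / D 1%nat (Hf U e t)) with (1 / D 1%nat (Uinv U (U t + e)) * D 1%nat t).
  2:{ unfold Hf. field. destruct hU as [a [b [hp c]]]. apply Rgt_not_eq. apply hp.
      apply (Uinv_spec U D (conj a (conj b (conj hp c))) hc); lra. }
  apply derivable_pt_lim_comp with (f1 := fun s => U s + e) (f2 := Uinv U).
  - replace (D 1%nat t) with (D 1%nat t + 0) by ring.
    apply (derivable_pt_lim_plus U (fun _ => e)). apply (U_der U D hU).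
    apply derivable_pt_lim_const.
  - apply (Uinv_der U D hU hc). lra.
Qed.

Lemma hp_bounds U D e : is_rise_function U D -> (forall x, 0 <= x -> 0 < D 2%nat x) -> 0 < e ->
  forall t, 0 <= t -> 0 < hp U D e t < 1.
Proof.
  intros hU hc he t ht. unfold hp.
  assert (g := Hf_gt U D e hU hc he t ht).
  assert (d1 : 0 < D 1%nat t) by (destruct hU as [_ [_ [hp _]]]; apply hp; auto).
  assert (d2 : D 1%nat t < D 1%nat (Hf U e t)) by (apply (D1_incr U D hU hc); auto).
  split. apply Rdiv_lt_0_compat; lra.
  apply (Rmult_lt_reg_r (D 1%nat (Hf U e t))). lra.
  unfold Rdiv. rewrite Rmult_assoc, Rinv_l by lra. lra.
Qed.

Lemma Hf_cont U D e : is_rise_function U D -> (forall x, 0 <= x -> 0 < D 2%nat x) -> 0 < e ->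
  forall t, 0 <= t -> continuity_pt (Hf U e) t.
Proof.
  intros hU hc he t ht.
  apply (derivable_continuous_pt _ t (exist _ _ (Hf_der U D e hU hc he t ht))).
Qed.

Lemma Hf_lin U D e : is_rise_function U D -> (forall x, 0 <= x -> 0 < D 2%nat x) -> 0 < e ->
  forall t, 0 <= t -> forall eps, 0 < eps -> exists d, 0 < d /\
    forall s, Rabs s < d -> Rabs (Hf U e (t + s) - Hf U e t - hp U D e t * s) <= eps * Rabs s.
Proof.
  intros hU hc he t ht eps heps.
  destruct (Hf_der U D e hU hc he t ht eps heps) as [[d hd] Hd].
  exists d; split; auto. intros s hs.
  destruct (Req_dec s 0). subst. rewrite Rplus_0_r. rewrite Rabs_R0. 
  replace (Hf U e t - Hf U e t - hp U D e t * 0) with 0 by ring. rewrite Rabs_R0; lra.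
  specialize (Hd s H hs).
  replace (Hf U e (t + s) - Hf U e t - hp U D e t * s) with
     (((Hf U e (t + s) - Hf U e t) / s - hp U D e t) * s) by (field; auto).
  rewrite Rabs_mult. apply Rmult_le_compat_r. apply Rabs_pos. lra.
Qed.

Lemma decP_true (P : Prop) : P -> decP P = true.
Proof. intro h. unfold decP. destruct (excluded_middle_informative P); tauto. Qed.
Lemma decP_false (P : Prop) : ~ P -> decP P = false.
Proof. intro h. unfold decP. destruct (excluded_middle_informative P); tauto. Qed.
Lemma decP_eq (P : Prop) : decP P = true -> P.
Proof. unfold decP. destruct (excluded_middle_informative P); auto. discriminate. Qed.

Lemma sumN_ext n f g : (forall j, (j < n)%nat -> f j = g j) -> sumN n f = sumN n g.
Proof.
  induction n; simpl; intros h; auto. rewrite IHn by (intros; apply h; lia). rewrite h by lia. auto.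
Qed.

Lemma sumN_zero n f : (forall j, (j < n)%nat -> f j = 0) -> sumN n f = 0.
Proof.
  induction n; simpl; intros h; auto. rewrite IHn by (intros; apply h; lia). rewrite h by lia. ring.
Qed.

Lemma sumN_single n f k : (k < n)%nat -> (forall j, (j < n)%nat -> j <> k -> f j = 0) -> sumN n f = f k.
Proof.
  induction n; simpl; intros hk h. lia.
  destruct (Nat.eq_dec k n).
  - subst. rewrite sumN_zero. ring. intros j hj. apply h; lia.
  - rewrite IHn by (try lia; intros; apply h; lia). rewrite (h n) by lia. ring.
Qed.

Lemma aval_none N eps U x : (forall i, (i < N)%nat -> x i <> 1) ->
  forall K, fst (aval N eps U x K) = (fun i => U (x i)) /\
            forall i, (i < N)%nat -> snd (aval N eps U x K) i = false.
Proof.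
  intros h. induction K.
  - simpl. split; auto. intros i hi. apply decP_false. apply h; auto.
  - simpl. destruct (aval N eps U x K) as [u th] eqn:E. simpl in IHK. destruct IHK as [Hu Hth].
    assert (Hs : forall i, sumN N (fun j => if th j then eps i j else 0) = 0).
    { intro i. apply sumN_zero. intros j hj. rewrite Hth; auto. }
    simpl. split.
    + apply functional_extensionality. intro i. rewrite Hs, Hu. ring.
    + intros i hi. apply decP_false. rewrite Hs. lra.
Qed.

Lemma theta1 N e U x f : (f < N)%nat -> x f = 1 ->
  (forall i, (i < N)%nat -> i <> f -> x i <> 1) ->
  forall i, snd (aval N (homog e) U x 1) i =
     decP (U (x i) < 1 <= U (x i) + homog e i f).
Proof.
  intros hf hx h i. simpl.
  rewrite (sumN_single N _ f hf).
  - rewrite (decP_true (x f = 1)) by auto; reflexivity.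
  - intros j hj hjf. rewrite decP_false by (apply h; auto). auto.
Qed.

Lemma fst_aval1 N e U x f : (f < N)%nat -> x f = 1 ->
  (forall i, (i < N)%nat -> i <> f -> x i <> 1) ->
  forall i, fst (aval N (homog e) U x 1) i = U (x i) + homog e i f.
Proof.
  intros hf hx h i. simpl.
  rewrite (sumN_single N _ f hf).
  - rewrite (decP_true (x f = 1)) by auto; reflexivity.
  - intros j hj hjf. rewrite decP_false by (apply h; auto). auto.
Qed.

Lemma homog_self e i : homog e i i = 0.
Proof. unfold homog. rewrite Nat.eqb_refl. auto. Qed.
Lemma homog_ne e i j : i <> j -> homog e i j = e.
Proof. intro h. unfold homog. apply Nat.eqb_neq in h. rewrite h. auto. Qed.

Lemma aval_later N e U x f : (f < N)%nat -> x f = 1 -> U 1 = 1 ->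
  (forall i, (i < N)%nat -> i <> f -> x i < 1 /\ U (x i) + e < 1) ->
  forall K, (1 <= K)%nat -> forall i, (i < N)%nat -> snd (aval N (homog e) U x K) i = false.
Proof.
  intros hf hx hU1 h.
  assert (h' : forall i, (i < N)%nat -> i <> f -> x i <> 1).
  { intros i hi hif. destruct (h i hi hif). lra. }
  induction K; intros hK i hi. lia.
  destruct K.
  - rewrite (theta1 N e U x f hf hx h' i). apply decP_false.
    destruct (Nat.eq_dec i f).
    + subst. rewrite hx, hU1. lra.
    + rewrite homog_ne by auto. destruct (h i hi n). lra.
  - change (aval N (homog e) U x (S (S K))) with
      (let (u, th) := aval N (homog e) U x (S K) in
       ((fun i => u i + sumN N (fun j => if th j then homog e i j else 0)),
        fun i => decP (u i < 1 <= u i + sumN N (fun j => if th j then homog e i j else 0)))).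
    destruct (aval N (homog e) U x (S K)) as [u th] eqn:E. simpl.
    apply decP_false. rewrite sumN_zero. lra.
    intros j hj. specialize (IHK ltac:(lia) j hj). simpl in IHK. rewrite IHK. auto.
Qed.

Lemma sem N e U x f : (f < N)%nat -> x f = 1 -> U 1 = 1 ->
  (forall i, (i < N)%nat -> i <> f -> x i < 1 /\ U (x i) + e < 1) ->
  forall i, (i < N)%nat ->
    (in_aval N (homog e) U x i <-> i = f) /\
    received N (homog e) U x i = homog e i f.
Proof.
  intros hf hx hU1 h.
  assert (Hin : forall i, (i < N)%nat -> (in_aval N (homog e) U x i <-> i = f)).
  { intros i hi. split.
    - intros [K HK]. unfold theta in HK. destruct K.
      + simpl in HK. apply decP_eq in HK. destruct (Nat.eq_dec i f); auto.
        destruct (h i hi n). lra.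
      + rewrite (aval_later N e U x f hf hx hU1 h (S K) ltac:(lia) i hi) in HK. discriminate.
    - intro; subst. exists O. unfold theta. simpl. apply decP_true. auto. }
  intros i hi. split. apply Hin; auto.
  unfold received. rewrite (sumN_single N _ f hf).
  - rewrite decP_true. auto. apply Hin; auto.
  - intros j hj hjf. rewrite decP_false. auto. rewrite Hin; auto.
Qed.

Lemma conv N e U D x j : is_rise_function U D ->
  valid_state N x -> (j < N)%nat ->
  (forall i, (i < N)%nat -> (in_aval N (homog e) U x i <-> i = j)) ->
  x j = 1 /\ forall i, (i < N)%nat -> i <> j -> x i < 1 /\ U (x i) + e < 1.
Proof.
  intros hU hv hj hs.
  assert (Ex : exists f, (f < N)%nat /\ x f = 1).
  { apply NNPP. intro hn.
    assert (hn' : forall i, (i < N)%nat -> x i <> 1).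
    { intros i hi hxi. apply hn. exists i; auto. }
    destruct (proj2 (hs j hj) eq_refl) as [K HK]. unfold theta in HK.
    rewrite (proj2 (aval_none N (homog e) U x hn' K) j hj) in HK. discriminate. }
  destruct Ex as [f [hf hxf]].
  assert (fj : f = j). { apply hs; auto. exists O. unfold theta. simpl. apply decP_true; auto. }
  subst f.
  assert (h1 : forall i, (i < N)%nat -> i <> j -> x i < 1).
  { intros i hi hij. destruct (hv i hi) as [a b]. destruct (Req_dec (x i) 1); [|lra].
    exfalso. apply hij. apply hs; auto. exists O. unfold theta. simpl. apply decP_true; auto. }
  split; auto. intros i hi hij. split; auto.
  destruct (Rlt_le_dec (U (x i) + e) 1); auto. exfalso.
  assert (hUx : U (x i) < 1).
  { rewrite <- (U1 U D hU). apply (U_incr U D hU). apply hv; auto. apply h1; auto. }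
  apply hij. apply hs; auto. exists 1%nat. unfold theta.
  rewrite (theta1 N e U x j hj hxf).
  - apply decP_true. rewrite homog_ne by auto. lra.
  - intros k hk hkj. specialize (h1 k hk hkj). lra.
Qed.

Definition qmap U e (f : nat) (x : state) : state :=
  fun i => if Nat.eqb i f then 0 else Hf U e (x i).
Definition stepm U e (f f' : nat) (x : state) : state :=
  fun i => qmap U e f x i + 1 - qmap U e f x f'.

Definition Good N U e (x : state) f :=
  (f < N)%nat /\ x f = 1 /\ forall i, (i < N)%nat -> i <> f -> 0 <= x i < 1 /\ U (x i) + e < 1.

Lemma event_inv N U D e Rf x y f : is_rise_function U D -> (forall x, 0 <= x -> 0 < D 2%nat x) -> 0 < e ->
  is_partial_reset Rf -> Good N U e x f ->
  event N (homog e) U Rf x y -> forall i, (i < N)%nat -> y i = qmap U e f x i.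
Proof.
  intros hU hc he hR [hf [hx h]] [_ hev] i hi.
  assert (h' : forall i, (i < N)%nat -> i <> f -> x i < 1 /\ U (x i) + e < 1).
  { intros j hj hjf. destruct (h j hj hjf) as [[a b] c]. auto. }
  destruct (sem N e U x f hf hx (U1 U D hU) h' i hi) as [Hin Hrec].
  destruct (hev i hi) as [hy [h1 h2]]. unfold qmap.
  destruct (Nat.eqb_spec i f).
  - subst. specialize (h1 (proj2 Hin eq_refl)). rewrite Hrec, homog_self, hx, (U1 U D hU) in h1.
    replace (1 + 0 - 1) with 0 in h1 by ring. destruct hR as [_ hR0]. rewrite hR0 in h1.
    apply (U_inj U D hU); auto. lra. rewrite (U0 U D hU); auto.
  - assert (n' : ~ in_aval N (homog e) U x i) by (rewrite Hin; auto).
    specialize (h2 n'). rewrite Hrec, homog_ne in h2 by auto.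
    unfold Hf. symmetry. apply (Uinv_unique U D hU hc); auto.
Qed.

Lemma event_ok N U D e Rf x f : is_rise_function U D -> (forall x, 0 <= x -> 0 < D 2%nat x) -> 0 < e ->
  is_partial_reset Rf -> Good N U e x f ->
  event N (homog e) U Rf x (qmap U e f x).
Proof.
  intros hU hc he hR [hf [hx h]].
  assert (h' : forall i, (i < N)%nat -> i <> f -> x i < 1 /\ U (x i) + e < 1).
  { intros j hj hjf. destruct (h j hj hjf) as [[a b] c]. auto. }
  split. exists f; auto.
  intros i hi. destruct (sem N e U x f hf hx (U1 U D hU) h' i hi) as [Hin Hrec].
  unfold qmap. destruct (Nat.eqb_spec i f).
  - subst. split. lra. split.
    + intros _. rewrite Hrec, homog_self, hx, (U1 U D hU), (U0 U D hU).
      replace (1 + 0 - 1) with 0 by ring. destruct hR as [_ hR0]. auto.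
    + intro hn. exfalso. apply hn. apply Hin. auto.
  - destruct (h i hi n) as [[a b] c].
    destruct (Hf_spec U D e hU hc he (x i) a) as [h1 h2].
    split; auto. split.
    + intro hin. exfalso. apply n. apply Hin; auto.
    + intros _. rewrite Hrec, homog_ne by auto. auto.
Qed.

Lemma qmap_lt1 N U D e x f f' : is_rise_function U D -> (forall x, 0 <= x -> 0 < D 2%nat x) -> 0 < e ->
  Good N U e x f -> (f' < N)%nat -> 0 <= qmap U e f x f' < 1.
Proof.
  intros hU hc he [hf [hx h]] hf'. unfold qmap. destruct (Nat.eqb_spec f' f). lra.
  destruct (h f' hf' n) as [[a b] c].
  destruct (Hf_spec U D e hU hc he (x f') a) as [h1 h2].
  split; auto. apply (U_lt U D hU); auto. lra. rewrite (U1 U D hU). lra.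
Qed.

Lemma qmap_nonneg N U D e x f : is_rise_function U D -> (forall x, 0 <= x -> 0 < D 2%nat x) -> 0 < e ->
  Good N U e x f -> forall i, (i < N)%nat -> 0 <= qmap U e f x i.
Proof.
  intros hU hc he [hf [hx h]] i hi. unfold qmap. destruct (Nat.eqb_spec i f). lra.
  destruct (h i hi n) as [[a b] c]. apply (Hf_spec U D e hU hc he (x i) a).
Qed.

Lemma flow_ok N U D e x f f' : is_rise_function U D -> (forall x, 0 <= x -> 0 < D 2%nat x) -> 0 < e ->
  Good N U e x f -> Good N U e (stepm U e f f' x) f' ->
  flow N (qmap U e f x) (stepm U e f f' x).
Proof.
  intros hU hc he hg hg'. destruct hg' as [hf' [hx' h']].
  exists (1 - qmap U e f x f'). split.
  { destruct (qmap_lt1 N U D e x f f' hU hc he hg hf'). lra. }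
  split. intros i hi. unfold stepm. ring.
  split. intros i hi. destruct (Nat.eq_dec i f'). subst; lra. destruct (h' i hi n). lra.
  exists f'. auto.
Qed.

Fixpoint traj U e (fs : nat -> nat) (s : state) (k : nat) : state :=
  match k with
  | O => s
  | S k' => stepm U e (fs k') (fs k) (traj U e fs s k')
  end.

Lemma Good_ext N U e x y f : (forall i, (i < N)%nat -> x i = y i) -> Good N U e x f -> Good N U e y f.
Proof.
  intros h [hf [hx hh]]. split; auto. split. rewrite <- h; auto.
  intros i hi hif. rewrite <- h by auto. auto.
Qed.

Lemma stepm_pos N U D e x f f' : is_rise_function U D -> (forall x, 0 <= x -> 0 < D 2%nat x) -> 0 < e ->
  Good N U e x f -> (f' < N)%nat -> forall i, (i < N)%nat -> 0 < stepm U e f f' x i.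
Proof.
  intros hU hc he hg hf' i hi. unfold stepm.
  assert (a := qmap_nonneg N U D e x f hU hc he hg i hi).
  assert (b := qmap_lt1 N U D e x f f' hU hc he hg hf'). lra.
Qed.

Lemma stepm_ext U e f f' x y N : (f < N)%nat -> (f' < N)%nat ->
  (forall i, (i < N)%nat -> x i = y i) -> forall i, (i < N)%nat -> stepm U e f f' x i = stepm U e f f' y i.
Proof.
  intros hf hf' h i hi. unfold stepm, qmap.
  destruct (Nat.eqb i f); destruct (Nat.eqb f' f); rewrite ?h by auto; auto.
Qed.

Definition orbit_data N U e r (x : state) m fs :=
  (0 < m)%nat /\ fs O = r /\ fs m = r /\
  (forall k, (k <= m)%nat -> Good N U e (traj U e fs x k) (fs k)) /\
  (forall i, (i < N)%nat -> traj U e fs x m i = x i) /\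
  (forall k, (0 < k)%nat -> (k < m)%nat -> fs k <> r) /\
  (forall k, (k <= m)%nat -> forall i, (i < N)%nat -> 0 < traj U e fs x k i).

Lemma valid_orbit N e U Rf r x m p q :
  valid_state N x -> return_orbit N (homog e) U Rf r x m p q ->
  forall k, (k <= m)%nat -> valid_state N (p k).
Proof.
  intros hv [hm [hp0 [hev _]]]. induction k; intros hk.
  - rewrite hp0; auto.
  - destruct (hev k ltac:(lia)) as [[_ he] [tau [ht [hz [hz1 _]]]]].
    intros i hi. rewrite hz by auto. destruct (he i hi) as [hy _]. split; [lra|]. 
    rewrite <- hz by auto. auto.
Qed.

Lemma extract N U D e Rf r x : is_rise_function U D -> (forall x, 0 <= x -> 0 < D 2%nat x) -> 0 < e ->
  is_partial_reset Rf -> (r < N)%nat ->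
  splay_state N (homog e) U Rf r x -> exists m fs, orbit_data N U e r x m fs.
Proof.
  intros hU hc he hR hr [[hv hin] [m [p [q [horb [hpm hsize]]]]]].
  assert (hvalid := valid_orbit N e U Rf r x m p q hv horb).
  destruct horb as [hm [hp0 [hev [hinm hnot]]]].
  set (F := fun k => epsilon (inhabits 0%nat)
         (fun j => (j < N)%nat /\ forall i, (i < N)%nat -> (in_aval N (homog e) U (p k) i <-> i = j))).
  assert (HF : forall k, (k < m)%nat -> (F k < N)%nat /\
      forall i, (i < N)%nat -> (in_aval N (homog e) U (p k) i <-> i = F k)).
  { intros k hk. unfold F. apply epsilon_spec. destruct (hsize k hk) as [j [hj hjj]]. exists j; auto. }
  set (fs := fun k => if (k <? m)%nat then F k else r).
  assert (Hfs : forall k, (k < m)%nat -> fs k = F k).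
  { intros k hk. unfold fs. apply Nat.ltb_lt in hk. rewrite hk. auto. }
  assert (Hfsm : fs m = r). { unfold fs. rewrite Nat.ltb_irrefl. auto. }
  assert (G0 : forall k, (k < m)%nat -> Good N U e (p k) (fs k)).
  { intros k hk. rewrite Hfs by auto. destruct (HF k hk) as [h1 h2].
    destruct (conv N e U D (p k) (F k) hU (hvalid k ltac:(lia)) h1 h2) as [a b].
    split; auto. split; auto. intros i hi hif. destruct (b i hi hif). split; auto.
    split; auto. apply (hvalid k ltac:(lia) i hi). }
  assert (Hfs0 : fs O = r).
  { rewrite Hfs by auto. symmetry. apply (HF O hm); auto. rewrite hp0; auto. }
  assert (Gm : Good N U e (p m) r).
  { rewrite <- Hfs0. apply (Good_ext N U e (p O)). intros i hi. rewrite hpm, hp0; auto. apply G0; auto. }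
  assert (Gall : forall k, (k <= m)%nat -> Good N U e (p k) (fs k)).
  { intros k hk. destruct (Nat.eq_dec k m) as [->|]. rewrite Hfsm; auto. apply G0; lia. }
  assert (Hstep : forall k, (k < m)%nat -> forall i, (i < N)%nat ->
      p (S k) i = stepm U e (fs k) (fs (S k)) (p k) i).
  { intros k hk i hi. destruct (hev k hk) as [hevk [tau [ht [hz [hz1 _]]]]].
    assert (Hq := event_inv N U D e Rf (p k) (q k) (fs k) hU hc he hR (G0 k hk) hevk).
    destruct (Gall (S k) hk) as [hf' [hx' _]].
    assert (Et : tau = 1 - qmap U e (fs k) (p k) (fs (S k))).
    { rewrite hz in hx' by auto. rewrite Hq in hx' by auto. lra. }
    rewrite hz, Hq by auto. unfold stepm. rewrite Et. ring. }
  assert (Htraj : forall k, (k <= m)%nat -> forall i, (i < N)%nat -> traj U e fs x k i = p k i).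
  { induction k; intros hk i hi. simpl. rewrite hp0; auto.
    simpl. rewrite Hstep by lia.
    destruct (Gall k ltac:(lia)) as [hfk _]. destruct (Gall (S k) hk) as [hfk' _].
    apply (stepm_ext U e _ _ _ _ N hfk hfk'); auto. intros j hj. apply IHk; auto. lia. }
  exists m, fs. split; auto. split; auto. split; auto. split.
  { intros k hk. apply (Good_ext N U e (p k)). intros i hi. symmetry. apply Htraj; auto. auto. }
  split. { intros i hi. rewrite Htraj by (auto; lia). rewrite hpm; auto. }
  split. { intros k hk0 hkm hfr. apply (hnot k hk0 hkm). rewrite Hfs in hfr by auto.
           apply (HF k hkm); auto. }
  assert (Hpos : forall k, (0 < k)%nat -> (k <= m)%nat -> forall i, (i < N)%nat -> 0 < traj U e fs x k i).
  { intros k hk0 hk i hi. destruct k. lia. simpl.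
    apply (stepm_pos N U D e _ (fs k)); auto.
    apply (Good_ext N U e (p k)). intros j hj. symmetry. apply Htraj; auto; lia. apply Gall; lia.
    destruct (Gall (S k) hk); auto. }
  intros k hk i hi. destruct k. simpl. rewrite <- (hpm i hi). rewrite <- Htraj by (auto; lia).
  apply Hpos; auto. apply Hpos; auto; lia.
Qed.

Lemma fin_min (n : nat) (P : nat -> R -> Prop) :
  (forall i d d', 0 < d' <= d -> P i d -> P i d') ->
  (forall i, (i < n)%nat -> exists d, 0 < d /\ P i d) ->
  exists d, 0 < d /\ forall i, (i < n)%nat -> P i d.
Proof.
  intros hm. induction n; intros h.
  - exists 1. split. lra. intros; lia.
  - destruct IHn as [d1 [hd1 H1]]. intros i hi; apply h; lia.
    destruct (h n ltac:(lia)) as [d2 [hd2 H2]].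
    exists (Rmin d1 d2). split. apply Rmin_pos; auto.
    intros i hi. destruct (Nat.eq_dec i n).
    + subst. apply (hm n d2); auto. split. apply Rmin_pos; auto. apply Rmin_r.
    + apply (hm i d1); auto. split. apply Rmin_pos; auto. apply Rmin_l. apply H1; lia.
Qed.

Lemma fin_max (n : nat) (g : nat -> R) : (forall i, (i < n)%nat -> g i < 1) ->
  exists c, c < 1 /\ forall i, (i < n)%nat -> g i <= c.
Proof.
  induction n; intros h.
  - exists 0. split. lra. intros; lia.
  - destruct IHn as [c [hc H]]. intros; apply h; lia.
    exists (Rmax c (g n)). split. apply Rmax_lub_lt; auto.
    intros i hi. destruct (Nat.eq_dec i n). subst. apply Rmax_r.
    eapply Rle_trans. apply H; lia. apply Rmax_l.
Qed.

Lemma norm1_ge N h i : (i < N)%nat -> Rabs (h i) <= norm1 N h.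
Proof.
  unfold norm1. induction N; simpl; intros hi. lia.
  assert (0 <= sumN N (fun j => Rabs (h j))).
  { clear. induction N; simpl. lra. assert (0 <= Rabs (h N)) by apply Rabs_pos. lra. }
  destruct (Nat.eq_dec i N). subst. lra. assert (Rabs (h i) <= sumN N (fun j => Rabs (h j))) by (apply IHN; lia).
  assert (0 <= Rabs (h N)) by apply Rabs_pos. lra.
Qed.

Lemma norm1_nonneg N h : 0 <= norm1 N h.
Proof. unfold norm1. induction N; simpl. lra. assert (0 <= Rabs (h N)) by apply Rabs_pos. lra. Qed.

Lemma norm1_le N h d : (forall i, (i < N)%nat -> Rabs (h i) < d) -> norm1 N h <= INR N * d.
Proof.
  unfold norm1. induction N; intros H. simpl; lra.
  change (sumN (S N) (fun j => Rabs (h j))) with (sumN N (fun j => Rabs (h j)) + Rabs (h N)).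
  rewrite S_INR. assert (Rabs (h N) < d) by (apply H; lia).
  assert (sumN N (fun j => Rabs (h j)) <= INR N * d) by (apply IHN; intros; apply H; lia). lra.
Qed.

Definition Dm U D e (f : nat) (A d : state) : state :=
  fun i => if Nat.eqb i f then 0 else hp U D e (A i) * d i.
Definition Lam U D e (f f' : nat) (A d : state) : state :=
  fun i => Dm U D e f A d i - Dm U D e f A d f'.

Fixpoint lin U D e fs (x : state) (k : nat) (d : state) : state :=
  match k with
  | O => d
  | S k' => Lam U D e (fs k') (fs k) (traj U e fs x k') (lin U D e fs x k' d)
  end.

Lemma Dm_bound N U D e f A d B : is_rise_function U D -> (forall x, 0 <= x -> 0 < D 2%nat x) -> 0 < e ->
  Good N U e A f -> (forall i, (i < N)%nat -> Rabs (d i) <= B) ->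
  forall i, (i < N)%nat -> Rabs (Dm U D e f A d i) <= B.
Proof.
  intros hU hc he [hf [hx hg]] hB i hi. unfold Dm. destruct (Nat.eqb_spec i f).
  rewrite Rabs_R0. specialize (hB i hi). assert (0 <= Rabs (d i)) by apply Rabs_pos. lra.
  destruct (hg i hi n) as [[a b] _].
  destruct (hp_bounds U D e hU hc he (A i) a).
  rewrite Rabs_mult, Rabs_right by lra.
  specialize (hB i hi). assert (0 <= Rabs (d i)) by apply Rabs_pos.
  assert (hp U D e (A i) * Rabs (d i) <= 1 * Rabs (d i)) by (apply Rmult_le_compat_r; lra). lra.
Qed.

Lemma lin_bound N U D e fs x m : is_rise_function U D -> (forall x, 0 <= x -> 0 < D 2%nat x) -> 0 < e ->
  (forall k, (k <= m)%nat -> Good N U e (traj U e fs x k) (fs k)) ->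
  forall k, (k <= m)%nat -> forall d B, (forall i, (i < N)%nat -> Rabs (d i) <= B) ->
  forall i, (i < N)%nat -> Rabs (lin U D e fs x k d i) <= 2 ^ k * B.
Proof.
  intros hU hc he hG. induction k; intros hk d B hB i hi; simpl.
  - rewrite Rmult_1_l; auto.
  - unfold Lam.
    assert (hI : forall j, (j < N)%nat -> Rabs (lin U D e fs x k d j) <= 2 ^ k * B) by (intros; apply IHk; auto; lia).
    destruct (hG (S k) hk) as [hf' _].
    assert (a := Dm_bound N U D e (fs k) _ _ _ hU hc he (hG k ltac:(lia)) hI i hi).
    assert (b := Dm_bound N U D e (fs k) _ _ _ hU hc he (hG k ltac:(lia)) hI (fs (S k)) hf').
    eapply Rle_trans. apply Rabs_triang. rewrite Rabs_Ropp. lra.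
Qed.

Lemma frechet N U D e fs x m : is_rise_function U D -> (forall x, 0 <= x -> 0 < D 2%nat x) -> 0 < e ->
  (forall k, (k <= m)%nat -> Good N U e (traj U e fs x k) (fs k)) ->
  forall k, (k <= m)%nat -> forall eps, 0 < eps -> exists d, 0 < d /\
    forall h : state, (forall i, (i < N)%nat -> Rabs (h i) < d) ->
    forall i, (i < N)%nat ->
      Rabs (traj U e fs (fun j => x j + h j) k i - traj U e fs x k i - lin U D e fs x k h i)
        <= eps * norm1 N h.
Proof.
  intros hU hc he hG. induction k; intros hk eps heps.
  - exists 1. split. lra. intros h _ i hi. simpl.
    replace (x i + h i - x i - h i) with 0 by ring. rewrite Rabs_R0.
    assert (0 <= norm1 N h) by apply norm1_nonneg. apply Rmult_le_pos; lra.
  - set (A := traj U e fs x k).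
    set (c := 2 ^ k + 1).
    assert (hc0 : 1 <= c). { unfold c. assert (0 < 2 ^ k) by (apply pow_lt; lra). lra. }
    set (e1 := eps / (4 * c)).
    assert (he1 : 0 < e1) by (unfold e1; apply Rdiv_lt_0_compat; lra).
    set (e2 := Rmin 1 (eps / 4)).
    assert (he2 : 0 < e2) by (unfold e2; apply Rmin_pos; lra).
    destruct (hG k ltac:(lia)) as [hfk [hxk hgk]].
    destruct (hG (S k) hk) as [hfk' _].
    destruct (fin_min N (fun j dd => j <> fs k -> forall s, Rabs s < dd ->
        Rabs (Hf U e (A j + s) - Hf U e (A j) - hp U D e (A j) * s) <= e1 * Rabs s)) as [dH [hdH HdH]].
    { intros j dd dd' hdd P hj s hs. apply P; auto. lra. }
    { intros j hj. destruct (Nat.eq_dec j (fs k)).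
      - exists 1. split. lra. intros; tauto.
      - destruct (hgk j hj n) as [[a _] _].
        destruct (Hf_lin U D e hU hc he (A j) a e1 he1) as [dd [hdd Hdd]].
        exists dd. split; auto. }
    destruct (IHk ltac:(lia) e2 he2) as [d2 [hd2 Hd2]].
    set (d := Rmin d2 (dH / (c * (INR N + 1)))).
    assert (hNp : 0 < INR N + 1) by (assert (0 <= INR N) by apply pos_INR; lra).
    assert (hd : 0 < d). { unfold d. apply Rmin_pos; auto. apply Rdiv_lt_0_compat; auto. apply Rmult_lt_0_compat; lra. }
    exists d. split; auto. intros h hh i hi.
    set (n1 := norm1 N h).
    assert (hn1 : 0 <= n1) by apply norm1_nonneg.
    assert (hn1d : n1 <= INR N * d) by (apply norm1_le; auto).
    assert (hdd2 : d <= d2) by apply Rmin_l.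
    assert (hddH : d <= dH / (c * (INR N + 1))) by apply Rmin_r.
    assert (hI : forall j, (j < N)%nat ->
      Rabs (traj U e fs (fun j => x j + h j) k j - A j - lin U D e fs x k h j) <= e2 * n1).
    { intros j hj. apply Hd2; auto. intros l hl. specialize (hh l hl). lra. }
    assert (hL : forall j, (j < N)%nat -> Rabs (lin U D e fs x k h j) <= 2 ^ k * n1).
    { intros j hj. apply (lin_bound N U D e fs x m hU hc he hG k ltac:(lia)); auto.
      intros l hl. apply norm1_ge; auto. }
    assert (hcn : c * n1 < dH).
    { assert (c * n1 <= c * (INR N * d)) by (apply Rmult_le_compat_l; lra).
      assert (c * (INR N * d) <= c * (INR N * (dH / (c * (INR N + 1))))).
      { apply Rmult_le_compat_l. lra. apply Rmult_le_compat_l. apply pos_INR. auto. }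
      assert (c * (INR N * (dH / (c * (INR N + 1)))) = dH * (INR N / (INR N + 1))) by (field; lra).
      assert (INR N / (INR N + 1) < 1).
      { apply (Rmult_lt_reg_r (INR N + 1)); auto. unfold Rdiv. rewrite Rmult_assoc, Rinv_l by lra. lra. }
      assert (dH * (INR N / (INR N + 1)) < dH * 1) by (apply Rmult_lt_compat_l; auto). lra. }
    assert (he2' : e2 <= 1) by apply Rmin_l.
    assert (he2'' : e2 <= eps / 4) by apply Rmin_r.
    set (E := fun j => qmap U e (fs k) (traj U e fs (fun j => x j + h j) k) j - qmap U e (fs k) A j
                        - Dm U D e (fs k) A (lin U D e fs x k h) j).
    assert (hE : forall j, (j < N)%nat -> Rabs (E j) <= eps / 2 * n1).
    { intros j hj. unfold E, qmap, Dm. destruct (Nat.eqb_spec j (fs k)).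
      - replace (0 - 0 - 0) with 0 by ring. rewrite Rabs_R0. apply Rmult_le_pos; lra.
      - set (dl := traj U e fs (fun j => x j + h j) k j - A j).
        set (l := lin U D e fs x k h j).
        assert (h1 : Rabs (dl - l) <= e2 * n1) by apply hI, hj.
        assert (h2 : Rabs l <= 2 ^ k * n1) by apply hL, hj.
        assert (h3 : Rabs dl <= c * n1).
        { unfold c. replace dl with ((dl - l) + l) by ring. eapply Rle_trans. apply Rabs_triang.
          assert (e2 * n1 <= 1 * n1) by (apply Rmult_le_compat_r; lra). lra. }
        assert (h4 : Rabs dl < dH) by lra.
        specialize (HdH j hj n dl h4).
        replace (traj U e fs (fun j => x j + h j) k j) with (A j + dl) by (unfold dl; ring).
        destruct (hgk j hj n) as [[a _] _].
        destruct (hp_bounds U D e hU hc he (A j) a) as [hp1 hp2].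
        replace (Hf U e (A j + dl) - Hf U e (A j) - hp U D e (A j) * l) with
          ((Hf U e (A j + dl) - Hf U e (A j) - hp U D e (A j) * dl) + hp U D e (A j) * (dl - l)) by ring.
        eapply Rle_trans. apply Rabs_triang. rewrite Rabs_mult, (Rabs_right (hp U D e (A j))) by lra.
        assert (hp U D e (A j) * Rabs (dl - l) <= 1 * (e2 * n1)).
        { apply Rmult_le_compat; try lra. apply Rabs_pos. }
        assert (e1 * Rabs dl <= e1 * (c * n1)) by (apply Rmult_le_compat_l; lra).
        assert (e1 * (c * n1) = eps / 4 * n1) by (unfold e1; field; lra).
        assert (e2 * n1 <= eps / 4 * n1) by (apply Rmult_le_compat_r; lra).
        lra. }
    simpl. fold A.
    replace (stepm U e (fs k) (fs (S k)) (traj U e fs (fun j => x j + h j) k) i -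
             stepm U e (fs k) (fs (S k)) A i -
             Lam U D e (fs k) (fs (S k)) A (lin U D e fs x k h) i) with (E i - E (fs (S k)))
      by (unfold E, stepm, Lam; ring).
    eapply Rle_trans. unfold Rminus at 1. apply Rabs_triang. rewrite Rabs_Ropp.
    assert (a1 := hE i hi). assert (a2 := hE (fs (S k)) hfk'). lra.
Qed.

Lemma lin_lin U D e fs x k a u v :
  lin U D e fs x k (fun l => a * u l + v l) = fun i => a * lin U D e fs x k u i + lin U D e fs x k v i.
Proof.
  induction k; simpl; auto. rewrite IHk. apply functional_extensionality. intro i.
  unfold Lam, Dm. destruct (Nat.eqb i (fs k)); destruct (Nat.eqb (fs (S k)) (fs k)); ring.
Qed.

Lemma lin_zero U D e fs x k : lin U D e fs x k (fun _ => 0) = fun _ => 0.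
Proof.
  induction k; simpl; auto. rewrite IHk. apply functional_extensionality. intro i.
  unfold Lam, Dm. destruct (Nat.eqb i (fs k)); destruct (Nat.eqb (fs (S k)) (fs k)); ring.
Qed.

Lemma lin_sum U D e fs x k n (c : nat -> R) (w : nat -> state) :
  lin U D e fs x k (fun l => sumN n (fun j => c j * w j l)) =
  fun i => sumN n (fun j => c j * lin U D e fs x k (w j) i).
Proof.
  induction n; simpl.
  - apply lin_zero.
  - replace (fun l => sumN n (fun j => c j * w j l) + c n * w n l) with
      (fun l => c n * w n l + sumN n (fun j => c j * w j l)) by
      (apply functional_extensionality; intro; ring).
    rewrite lin_lin, IHn. apply functional_extensionality; intro; ring.
Qed.

Lemma lin_ext N U D e fs x m : (forall k, (k <= m)%nat -> (fs k < N)%nat) ->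
  forall k, (k <= m)%nat -> forall u v, (forall l, (l < N)%nat -> u l = v l) ->
  forall i, (i < N)%nat -> lin U D e fs x k u i = lin U D e fs x k v i.
Proof.
  intros hf. induction k; intros hk u v h i hi; simpl; auto.
  unfold Lam, Dm. assert (hf' := hf (S k) hk).
  destruct (Nat.eqb i (fs k)); destruct (Nat.eqb (fs (S k)) (fs k));
  rewrite ?(IHk ltac:(lia) u v h i hi), ?(IHk ltac:(lia) u v h (fs (S k)) hf'); auto.
Qed.

Definition unitv (j : nat) : state := fun l => if Nat.eqb l j then 1 else 0.
Definition zr (r : nat) (v : state) : state := fun l => if Nat.eqb l r then 0 else v l.

Lemma decomp N (v : state) : forall l, (l < N)%nat -> v l = sumN N (fun j => v j * unitv j l).
Proof.
  intros l hl. rewrite (sumN_single N _ l hl). unfold unitv. rewrite Nat.eqb_refl. ring.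
  intros j hj hjl. unfold unitv. destruct (Nat.eqb_spec l j). subst; tauto. ring.
Qed.

Definition Mat U D e fs x m r : nat -> nat -> R :=
  fun i j => if Nat.eqb j r then 0 else lin U D e fs x m (unitv j) i.

Lemma matvec_lin N U D e fs x m r : (forall k, (k <= m)%nat -> (fs k < N)%nat) ->
  forall v i, (i < N)%nat -> matvec N (Mat U D e fs x m r) v i = lin U D e fs x m (zr r v) i.
Proof.
  intros hf v i hi. unfold matvec.
  rewrite (lin_ext N U D e fs x m hf m (Nat.le_refl m) (zr r v)
             (fun l => sumN N (fun j => zr r v j * unitv j l))) by (first [intros; apply decomp; auto | auto]).
  rewrite lin_sum. apply sumN_ext. intros j hj. unfold Mat, zr.
  destruct (Nat.eqb j r); ring.
Qed.

Lemma fin_maxP (n : nat) (P : nat -> R -> Prop) :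
  (forall i c c', c <= c' -> P i c -> P i c') ->
  (forall i, (i < n)%nat -> exists c, c < 1 /\ P i c) ->
  exists c, 0 <= c < 1 /\ forall i, (i < n)%nat -> P i c.
Proof.
  intros hm. induction n; intros h.
  - exists 0. split. lra. intros; lia.
  - destruct IHn as [c1 [hc1 H1]]. intros i hi; apply h; lia.
    destruct (h n ltac:(lia)) as [c2 [hc2 H2]].
    exists (Rmax c1 c2). split. split. eapply Rle_trans; [|apply Rmax_l]; lra. apply Rmax_lub_lt; lra.
    intros i hi. destruct (Nat.eq_dec i n).
    + subst. apply (hm n c2); auto. apply Rmax_r.
    + apply (hm i c1); auto. apply Rmax_l. apply H1; lia.
Qed.

Definition W N (d : state) w := exists a, forall i, (i < N)%nat -> a <= d i <= a + w.

Lemma Lam_contr N U D e f f' A d w c : is_rise_function U D -> (forall x, 0 <= x -> 0 < D 2%nat x) -> 0 < e ->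
  Good N U e A f -> (f' < N)%nat -> 0 <= c ->
  (forall i, (i < N)%nat -> i <> f -> hp U D e (A i) <= c) ->
  d f = 0 -> W N d w -> W N (Lam U D e f f' A d) (c * w).
Proof.
  intros hU hc he [hf [hx hg]] hf' hc0 hcb hd0 [a ha].
  destruct (ha f hf) as [a1 a2]. rewrite hd0 in a1, a2.
  assert (hD : forall i, (i < N)%nat -> c * a <= Dm U D e f A d i <= c * a + c * w).
  { intros i hi. unfold Dm. destruct (Nat.eqb_spec i f).
    - split. assert (c * a <= c * 0) by (apply Rmult_le_compat_l; lra). lra.
      assert (c * 0 <= c * (a + w)) by (apply Rmult_le_compat_l; lra). lra.
    - destruct (hg i hi n) as [[b1 _] _]. destruct (hp_bounds U D e hU hc he (A i) b1) as [p1 p2].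
      specialize (hcb i hi n). destruct (ha i hi) as [d1 d2].
      destruct (Rle_lt_dec 0 (d i)).
      + assert (0 <= hp U D e (A i) * d i) by (apply Rmult_le_pos; lra).
        assert (hp U D e (A i) * d i <= c * d i) by (apply Rmult_le_compat_r; lra).
        assert (c * d i <= c * (a + w)) by (apply Rmult_le_compat_l; lra).
        assert (c * a <= c * 0) by (apply Rmult_le_compat_l; lra). lra.
      + assert (hp U D e (A i) * d i <= 0) by nra.
        assert (c * d i <= hp U D e (A i) * d i).
        { assert ((c - hp U D e (A i)) * (- d i) >= 0) by (apply Rle_ge, Rmult_le_pos; lra). nra. }
        assert (c * a <= c * d i) by (apply Rmult_le_compat_l; lra).
        assert (c * 0 <= c * (a + w)) by (apply Rmult_le_compat_l; lra). lra. }
  exists (c * a - Dm U D e f A d f'). intros i hi. unfold Lam.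
  destruct (hD i hi). lra.
Qed.

Lemma lin_contr N U D e fs x m c : is_rise_function U D -> (forall x, 0 <= x -> 0 < D 2%nat x) -> 0 < e ->
  (forall k, (k <= m)%nat -> Good N U e (traj U e fs x k) (fs k)) -> 0 <= c ->
  (forall k, (k < m)%nat -> forall i, (i < N)%nat -> i <> fs k -> hp U D e (traj U e fs x k i) <= c) ->
  forall k, (k <= m)%nat -> forall d w, d (fs O) = 0 -> W N d w ->
  lin U D e fs x k d (fs k) = 0 /\ W N (lin U D e fs x k d) (c ^ k * w).
Proof.
  intros hU hc he hG hc0 hcb. induction k; intros hk d w hd hW; simpl.
  - split; auto. destruct hW as [a ha]. exists a. intros. rewrite Rmult_1_l. auto.
  - destruct (IHk ltac:(lia) d w hd hW) as [h1 h2]. split.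
    + unfold Lam. ring.
    + replace (c * c ^ k * w) with (c * (c ^ k * w)) by ring.
      destruct (hG (S k) hk) as [hf' _].
      apply (Lam_contr N U D e); auto. apply hG; lia.
Qed.

Lemma W_bound N d w r : (r < N)%nat -> d r = 0 -> W N d w -> forall i, (i < N)%nat -> Rabs (d i) <= w.
Proof.
  intros hr hd [a ha] i hi. destruct (ha r hr) as [b1 b2]. rewrite hd in b1, b2.
  destruct (ha i hi). apply Rabs_le. lra.
Qed.

Lemma W_mono N d w w' : w <= w' -> W N d w -> W N d w'.
Proof.
  intros h [a ha]. exists a. intros i hi. destruct (ha i hi). lra.
Qed.

Lemma margin U D e A : is_rise_function U D -> 0 < A < 1 -> U A + e < 1 ->
  exists dd, 0 < dd /\ forall t, Rabs (t - A) < dd -> 0 < t < 1 /\ U t + e < 1.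
Proof.
  intros hU hA hUA.
  assert (hc := U_cont U D hU A). unfold continuity_pt, continue_in, limit1_in, limit_in in hc.
  destruct (hc (1 - e - U A) ltac:(lra)) as [alp [halp Halp]].
  exists (Rmin alp (Rmin A (1 - A))). split.
  { apply Rmin_pos; auto. apply Rmin_pos; lra. }
  intros t ht.
  assert (h1 : Rabs (t - A) < alp) by (eapply Rlt_le_trans; [apply ht | apply Rmin_l]).
  assert (h2 : Rabs (t - A) < Rmin A (1 - A)) by (eapply Rlt_le_trans; [apply ht | apply Rmin_r]).
  assert (h3 : Rabs (t - A) < A) by (eapply Rlt_le_trans; [apply h2 | apply Rmin_l]).
  assert (h4 : Rabs (t - A) < 1 - A) by (eapply Rlt_le_trans; [apply h2 | apply Rmin_r]).
  apply Rabs_def2 in h3. apply Rabs_def2 in h4.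
  split. lra.
  destruct (Req_dec t A). subst; lra.
  assert (hh : dist R_met (U t) (U A) < 1 - e - U A). { apply Halp. split. split. exact I. intro; apply H; auto. exact h1. }
  simpl in hh. unfold Rdist in hh. apply Rabs_def2 in hh. lra.
Qed.

Lemma goods N U e x f : Good N U e x f -> forall i, (i < N)%nat -> i <> f -> x i < 1 /\ U (x i) + e < 1.
Proof. intros [_ [_ h]] i hi hif. destruct (h i hi hif) as [[a b] c]. auto. Qed.

Lemma stable N U D e Rf r x : is_rise_function U D -> (forall x, 0 <= x -> 0 < D 2%nat x) -> 0 < e ->
  is_partial_reset Rf -> (r < N)%nat ->
  splay_state N (homog e) U Rf r x -> linearly_stable N (homog e) U Rf r x.
Proof.
  intros hU hc he hR hr hs.
  destruct (extract N U D e Rf r x hU hc he hR hr hs) as [m [fs [hm [hf0 [hfm [hG [hxm [hnr hpos]]]]]]]].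
  assert (hfN : forall k, (k <= m)%nat -> (fs k < N)%nat) by (intros k hk; apply (hG k hk)).
  assert (hx1 : x r = 1). { destruct (hG O ltac:(lia)) as [_ [a _]]. rewrite hf0 in a. exact a. }
  assert (hU1 := U1 U D hU).
  exists (Mat U D e fs x m r). split.
  -
    intros eps heps.
    destruct (frechet N U D e fs x m hU hc he hG m (Nat.le_refl m) eps heps) as [d1 [hd1 Hd1]].
    destruct (fin_min (S m) (fun k dd => (k <= m)%nat -> forall h : state,
        (forall i, (i < N)%nat -> Rabs (h i) < dd) -> forall i, (i < N)%nat ->
        Rabs (traj U e fs (fun j => x j + h j) k i - traj U e fs x k i - lin U D e fs x k h i)
          <= 1 * norm1 N h)) as [dC [hdC HdC]].
    { intros k dd dd' hdd P hk h hh. apply P; auto. intros i hi. specialize (hh i hi). lra. }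
    { intros k hk. destruct (frechet N U D e fs x m hU hc he hG k ltac:(lia) 1 ltac:(lra)) as [dd [hdd Hdd]].
      exists dd. split; auto. }
    destruct (fin_min (S m) (fun k dd => (k <= m)%nat -> forall i, (i < N)%nat -> i <> fs k ->
        forall t, Rabs (t - traj U e fs x k i) < dd -> 0 < t < 1 /\ U t + e < 1)) as [dM [hdM HdM]].
    { intros k dd dd' hdd P hk i hi hik t ht. apply (P hk i hi hik). lra. }
    { intros k hk. destruct (fin_min N (fun i dd => i <> fs k ->
          forall t, Rabs (t - traj U e fs x k i) < dd -> 0 < t < 1 /\ U t + e < 1)) as [dd [hdd Hdd]].
      { intros i dd dd' hdd P hik t ht. apply P; auto. lra. }
      { intros i hi. destruct (Nat.eq_dec i (fs k)).
        - exists 1. split. lra. intros; tauto.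
        - destruct (goods N U e _ _ (hG k ltac:(lia)) i hi n) as [a b].
          destruct (margin U D e (traj U e fs x k i) hU) as [dd [hdd Hdd]]; auto.
          split; auto. apply hpos; auto; lia.
          exists dd. split; auto. }
      exists dd. split; auto. }
    set (K := 2 ^ m + 1).
    assert (hK : 1 <= K). { unfold K. assert (0 < 2 ^ m) by (apply pow_lt; lra). lra. }
    assert (hNp : 0 < INR N + 1) by (assert (0 <= INR N) by apply pos_INR; lra).
    set (d := Rmin d1 (Rmin dC (dM / (K * (INR N + 1))))).
    assert (hd : 0 < d).
    { unfold d. repeat apply Rmin_pos; auto. apply Rdiv_lt_0_compat; auto. apply Rmult_lt_0_compat; lra. }
    exists d. split; auto. intros h hr0 hh.
    set (n1 := norm1 N h).
    assert (hn1 : 0 <= n1) by apply norm1_nonneg.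
    assert (hn1d : n1 <= INR N * d) by (apply norm1_le; auto).
    assert (hdd1 : d <= d1) by apply Rmin_l.
    assert (hddC : d <= dC) by (eapply Rle_trans; [apply Rmin_r | apply Rmin_l]).
    assert (hddM : d <= dM / (K * (INR N + 1))) by (eapply Rle_trans; [apply Rmin_r | apply Rmin_r]).
    assert (hKn : K * n1 < dM).
    { assert (K * n1 <= K * (INR N * d)) by (apply Rmult_le_compat_l; lra).
      assert (K * (INR N * d) <= K * (INR N * (dM / (K * (INR N + 1))))).
      { apply Rmult_le_compat_l. lra. apply Rmult_le_compat_l. apply pos_INR. auto. }
      assert (K * (INR N * (dM / (K * (INR N + 1)))) = dM * (INR N / (INR N + 1))) by (field; lra).
      assert (INR N / (INR N + 1) < 1).
      { apply (Rmult_lt_reg_r (INR N + 1)); auto. unfold Rdiv. rewrite Rmult_assoc, Rinv_l by lra. lra. }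
      assert (dM * (INR N / (INR N + 1)) < dM * 1) by (apply Rmult_lt_compat_l; auto). lra. }
    set (s := fun j => x j + h j).
    set (P := traj U e fs s).
    assert (hclose : forall k, (k <= m)%nat -> forall i, (i < N)%nat -> Rabs (P k i - traj U e fs x k i) < dM).
    { intros k hk i hi.
      assert (a := HdC k ltac:(lia) hk h ltac:(intros l hl; specialize (hh l hl); lra) i hi).
      assert (b := lin_bound N U D e fs x m hU hc he hG k hk h n1 ltac:(intros; apply norm1_ge; auto) i hi).
      change (Rabs (P k i - traj U e fs x k i - lin U D e fs x k h i) <= 1 * n1) in a.
      assert (c : 2 ^ k <= 2 ^ m) by (apply Rle_pow; [lra | lia]).
      assert (2 ^ k * n1 <= 2 ^ m * n1) by (apply Rmult_le_compat_r; auto).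
      replace (P k i - traj U e fs x k i) with
        ((P k i - traj U e fs x k i - lin U D e fs x k h i) + lin U D e fs x k h i) by ring.
      eapply Rle_lt_trans. apply Rabs_triang. unfold K in hKn. lra. }
    assert (hGP : forall k, (k <= m)%nat -> Good N U e (P k) (fs k)).
    { intros k hk. split. apply hfN; auto. split.
      - destruct k. unfold P; simpl; unfold s. rewrite hf0, hr0, hx1. ring.
        unfold P. simpl. unfold stepm. ring.
      - intros i hi hik. destruct (HdM k ltac:(lia) hk i hi hik (P k i) (hclose k hk i hi)). split; auto. lra. }
    exists (P m). split.
    + split.
      * split.
        -- intros i hi. change (0 <= P O i <= 1). destruct (Nat.eq_dec i r) as [->|n].
           ++ unfold P; simpl; unfold s. rewrite hr0, hx1. lra.
           ++ rewrite <- hf0 in n. destruct (hGP O ltac:(lia)) as [_ [_ g]]. destruct (g i hi n). lra.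
        -- change (in_aval N (homog e) U (P O) r).
           destruct (hGP O ltac:(lia)) as [a [b _]].
           apply (sem N e U (P O) (fs O) a b hU1 (goods N U e _ _ (hGP O ltac:(lia))) r hr). auto.
      * exists m, P, (fun k => qmap U e (fs k) (P k)). split.
        -- split; auto. split. reflexivity. split.
           ++ intros k hk. split.
              ** apply (event_ok N U D e Rf (P k) (fs k)); auto. apply hGP; lia.
              ** change (flow N (qmap U e (fs k) (P k)) (stepm U e (fs k) (fs (S k)) (P k))).
                 apply (flow_ok N U D e); auto. apply hGP; lia. apply (hGP (S k)); lia.
           ++ split.
              ** destruct (hGP m ltac:(lia)) as [a [b _]].
                 apply (sem N e U (P m) (fs m) a b hU1 (goods N U e _ _ (hGP m ltac:(lia))) r hr). auto.
              ** intros k hk0 hkm hin. apply (hnr k hk0 hkm).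
                 destruct (hGP k ltac:(lia)) as [a [b _]].
                 symmetry. apply (sem N e U (P k) (fs k) a b hU1 (goods N U e _ _ (hGP k ltac:(lia))) r hr). auto.
        -- intros; reflexivity.
    + intros i hi. rewrite (matvec_lin N U D e fs x m r hfN h i hi).
      replace (zr r h) with h.
      2:{ apply functional_extensionality. intro l. unfold zr. destruct (Nat.eqb_spec l r). subst; auto. auto. }
      rewrite <- (hxm i hi). apply Hd1; auto. intros l hl. specialize (hh l hl). lra.
  -
    destruct (fin_maxP m (fun k c => forall i, (i < N)%nat -> i <> fs k -> hp U D e (traj U e fs x k i) <= c))
      as [c [hc01 Hc]].
    { intros k c c' hcc P i hi hik. specialize (P i hi hik). lra. }
    { intros k hk. destruct (fin_maxP N (fun i c => i <> fs k -> hp U D e (traj U e fs x k i) <= c))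
        as [c [hc1 Hc]].
      { intros i c c' hcc P hik. specialize (P hik). lra. }
      { intros i hi. destruct (Nat.eq_dec i (fs k)).
        - exists 0. split. lra. intros; tauto.
        - destruct (hG k ltac:(lia)) as [_ [_ g]]. destruct (g i hi n) as [[a _] _].
          exists (hp U D e (traj U e fs x k i)). split. apply (hp_bounds U D e hU hc he); auto. intros; lra. }
      exists c. split. lra. auto. }
    intros v hv0 i hi.
    set (M := Mat U D e fs x m r).
    set (w0 := 2 * norm1 N v).
    assert (hw0 : 0 <= w0) by (unfold w0; assert (0 <= norm1 N v) by apply norm1_nonneg; lra).
    assert (hcm : c ^ m <= c).
    { destruct m. lia. simpl. assert (c ^ m <= 1) by (rewrite <- (pow1 m); apply pow_incr; lra).
      assert (c * c ^ m <= c * 1) by (apply Rmult_le_compat_l; lra). lra. }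
    assert (Hit : forall n, Nat.iter n (matvec N M) v r = 0 /\ W N (Nat.iter n (matvec N M) v) (c ^ n * w0)).
    { induction n.
      - simpl. split; auto. exists (- norm1 N v). intros l hl. rewrite Rmult_1_l. unfold w0.
        assert (a := norm1_ge N v l hl). assert (v l <= Rabs (v l)) by apply Rle_abs. assert (- v l <= Rabs (v l)) by (rewrite <- Rabs_Ropp; apply Rle_abs). lra.
      - destruct IHn as [h1 h2]. set (V := Nat.iter n (matvec N M) v) in *.
        assert (E : forall l, (l < N)%nat -> Nat.iter (S n) (matvec N M) v l = lin U D e fs x m V l).
        { intros l hl. change (matvec N M V l = lin U D e fs x m V l). unfold M.
          rewrite (matvec_lin N U D e fs x m r hfN V l hl).
          replace (zr r V) with V; auto.
          apply functional_extensionality. intro j. unfold zr. destruct (Nat.eqb_spec j r). subst; auto. auto. }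
        assert (hcpos : 0 <= c ^ n) by (apply pow_le; lra).
        destruct (lin_contr N U D e fs x m c hU hc he hG ltac:(lra)
                    ltac:(intros k hk; apply Hc; auto) m (Nat.le_refl m) V (c ^ n * w0))
          as [g1 [a ga]]; auto.
        { rewrite hf0; auto. }
        split.
        + rewrite E by auto. rewrite <- hfm. auto.
        + exists a. intros l hl. rewrite E by auto. destruct (ga l hl). split; auto.
          simpl. assert (c ^ m * (c ^ n * w0) <= c * (c ^ n * w0)).
          { apply Rmult_le_compat_r; auto. apply Rmult_le_pos; auto. }
          lra. }
    intros eps heps.
    destruct (pow_lt_1_zero c ltac:(rewrite Rabs_right; lra) (eps / (w0 + 1)) ltac:(apply Rdiv_lt_0_compat; lra))
      as [N0 HN0].
    exists N0. intros n hn. unfold Rdist. rewrite Rminus_0_r.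
    destruct (Hit n) as [h1 h2].
    assert (b := W_bound N _ _ r hr h1 h2 i hi).
    specialize (HN0 n hn). rewrite Rabs_right in HN0 by (apply Rle_ge, pow_le; lra).
    assert (hcpos : 0 <= c ^ n) by (apply pow_le; lra).
    assert (c ^ n * w0 <= c ^ n * (w0 + 1)) by (apply Rmult_le_compat_l; lra).
    assert (c ^ n * (w0 + 1) < eps / (w0 + 1) * (w0 + 1)) by (apply Rmult_lt_compat_r; lra).
    assert (eps / (w0 + 1) * (w0 + 1) = eps) by (field; lra).
    lra.
Qed.

Fixpoint bseq U e (c : R) (j : nat) : R :=
  match j with O => c | S j' => Hf U e (bseq U e c j') + c end.


Lemma bseq_ge U D e : is_rise_function U D -> (forall x, 0 <= x -> 0 < D 2%nat x) -> 0 < e ->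
  forall c, 0 <= c -> forall j, c <= bseq U e c j.
Proof.
  intros hU hc he c hc0. induction j; simpl. lra.
  assert (0 <= Hf U e (bseq U e c j)) by (apply (Hf_spec U D e hU hc he); lra). lra.
Qed.

Lemma bseq_incr U D e : is_rise_function U D -> (forall x, 0 <= x -> 0 < D 2%nat x) -> 0 < e ->
  forall c, 0 <= c -> forall j, bseq U e c j < bseq U e c (S j).
Proof.
  intros hU hc he c hc0 j. simpl.
  assert (c <= bseq U e c j) by (apply (bseq_ge U D e); auto).
  assert (bseq U e c j < Hf U e (bseq U e c j)) by (apply (Hf_gt U D e hU hc he); lra). lra.
Qed.

Lemma bseq_mono U D e : is_rise_function U D -> (forall x, 0 <= x -> 0 < D 2%nat x) -> 0 < e ->
  forall c, 0 <= c -> forall j j', (j < j')%nat -> bseq U e c j < bseq U e c j'.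
Proof.
  intros hU hc he c hc0 j j' h. induction h.
  apply (bseq_incr U D e); auto.
  eapply Rlt_trans. apply IHh. apply (bseq_incr U D e); auto.
Qed.

Lemma bseq_cont U D e : is_rise_function U D -> (forall x, 0 <= x -> 0 < D 2%nat x) -> 0 < e ->
  forall j c, 0 <= c -> continuity_pt (fun c => bseq U e c j) c.
Proof.
  intros hU hc he j c hc0. induction j; simpl.
  - apply derivable_continuous_pt. apply derivable_pt_id.
  - apply continuity_pt_plus; [| apply derivable_continuous_pt; apply derivable_pt_id].
    apply (continuity_pt_comp (fun c => bseq U e c j) (Hf U e)); auto.
    apply (Hf_cont U D e hU hc he). assert (c <= bseq U e c j) by (apply (bseq_ge U D e); auto). lra.
Qed.

Lemma bseq0 U D e : is_rise_function U D -> (forall x, 0 <= x -> 0 < D 2%nat x) -> 0 < e ->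
  forall j, U (bseq U e 0 j) = INR j * e.
Proof.
  intros hU hc he. induction j.
  - simpl. rewrite (U0 U D hU). ring.
  - change (bseq U e 0 (S j)) with (Hf U e (bseq U e 0 j) + 0). rewrite Rplus_0_r. assert (0 <= bseq U e 0 j) by (apply (bseq_ge U D e hU hc he); lra).
    rewrite (proj2 (Hf_spec U D e hU hc he _ H)), IHj. rewrite S_INR. ring.
Qed.

Lemma exists_c N U D e : is_rise_function U D -> (forall x, 0 <= x -> 0 < D 2%nat x) -> 0 < e ->
  INR (N - 1) * e < 1 -> exists c, 0 < c <= 1 /\ bseq U e c (N - 1) = 1.
Proof.
  intros hU hc he heN.
  assert (g0 : bseq U e 0 (N - 1) < 1).
  { apply (U_lt U D hU). apply (bseq_ge U D e hU hc he); lra. lra.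
    rewrite (bseq0 U D e hU hc he), (U1 U D hU). auto. }
  assert (g1 : 1 <= bseq U e 1 (N - 1)) by (apply (bseq_ge U D e hU hc he); lra).
  destruct (Req_dec (bseq U e 1 (N - 1)) 1).
  - exists 1. split; auto. lra.
  - destruct (IVT_interv (fun c => bseq U e c (N - 1) - 1) 0 1) as [z [hz1 hz2]].
    + intros a ha. apply continuity_pt_minus. apply (bseq_cont U D e hU hc he); lra.
      apply continuity_pt_const. intros ? ?; auto.
    + lra.
    + lra.
    + lra.
    + exists z. split; [|lra]. split; [|lra].
      destruct (Req_dec z 0); [|lra]. subst. lra.
Qed.

Fixpoint fsq (N r k : nat) : nat :=
  match k with O => r | S k' => if Nat.eqb (fsq N r k') (N - 1) then O else S (fsq N r k') end.
Definition rk N r k i : nat := if (fsq N r k <=? i)%nat then (i - fsq N r k)%nat else (i + N - fsq N r k)%nat.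

Lemma fsq_lt N r : (r < N)%nat -> forall k, (fsq N r k < N)%nat.
Proof.
  intros hr. induction k; simpl; auto. destruct (Nat.eqb_spec (fsq N r k) (N - 1)); lia.
Qed.

Lemma fsq_closed N r : (r < N)%nat -> forall k, (k <= N)%nat ->
  fsq N r k = if (r + k <? N)%nat then (r + k)%nat else (r + k - N)%nat.
Proof.
  intros hr. induction k; intros hk; simpl.
  - destruct (Nat.ltb_spec (r + 0) N); lia.
  - rewrite IHk by lia.
    destruct (Nat.ltb_spec (r + k) N); destruct (Nat.ltb_spec (r + S k) N);
    destruct (Nat.eqb_spec (r + k) (N - 1)); destruct (Nat.eqb_spec (r + k - N) (N - 1)); lia.
Qed.

Lemma fsq_N N r : (r < N)%nat -> fsq N r N = r.
Proof. intros hr. rewrite fsq_closed by lia. destruct (Nat.ltb_spec (r + N) N); lia. Qed.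

Lemma fsq_ne N r : (r < N)%nat -> forall k, (0 < k)%nat -> (k < N)%nat -> fsq N r k <> r.
Proof. intros hr k h1 h2. rewrite fsq_closed by lia. destruct (Nat.ltb_spec (r + k) N); lia. Qed.

Lemma rk_lt N r : (r < N)%nat -> forall k i, (i < N)%nat -> (rk N r k i < N)%nat.
Proof.
  intros hr k i hi. unfold rk. assert (h := fsq_lt N r hr k).
  destruct (Nat.leb_spec (fsq N r k) i); lia.
Qed.

Lemma rk_zero N r : (r < N)%nat -> forall k i, (i < N)%nat -> (rk N r k i = 0%nat <-> i = fsq N r k).
Proof.
  intros hr k i hi. unfold rk. assert (h := fsq_lt N r hr k).
  destruct (Nat.leb_spec (fsq N r k) i); lia.
Qed.

Lemma rk_step N r : (r < N)%nat -> forall k i, (i < N)%nat ->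
  rk N r (S k) i = if Nat.eqb (rk N r k i) 0 then (N - 1)%nat else (rk N r k i - 1)%nat.
Proof.
  intros hr k i hi. unfold rk. assert (h := fsq_lt N r hr k).
  assert (Hf' : fsq N r (S k) = if Nat.eqb (fsq N r k) (N - 1) then O else S (fsq N r k)) by reflexivity.
  rewrite Hf'. generalize dependent (fsq N r k). intros f hf.
  repeat match goal with
  | |- context [Nat.leb ?a ?b] => destruct (Nat.leb_spec a b)
  | |- context [Nat.eqb ?a ?b] => destruct (Nat.eqb_spec a b)
  end; lia.
Qed.

Lemma rk_next N r : (r < N)%nat -> (2 <= N)%nat -> forall k, rk N r k (fsq N r (S k)) = 1%nat.
Proof.
  intros hr hN k. unfold rk. assert (h := fsq_lt N r hr k). simpl.
  destruct (Nat.eqb_spec (fsq N r k) (N - 1)).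
  - destruct (Nat.leb_spec (fsq N r k) 0); lia.
  - destruct (Nat.leb_spec (fsq N r k) (S (fsq N r k))); lia.
Qed.

Lemma exist_splay N U D e Rf r : is_rise_function U D -> (forall x, 0 <= x -> 0 < D 2%nat x) -> 0 < e ->
  is_partial_reset Rf -> (1 <= N)%nat -> INR (N - 1) * e < 1 -> (r < N)%nat ->
  exists x, splay_state N (homog e) U Rf r x.
Proof.
  intros hU hc he hR hN heN hr.
  destruct (exists_c N U D e hU hc he heN) as [c [hc01 hbc]].
  set (ph := fun s => bseq U e c (N - 1 - s)).
  assert (ph0 : ph O = 1) by (unfold ph; rewrite Nat.sub_0_r; auto).
  assert (phN : ph (N - 1)%nat = c) by (unfold ph; replace (N - 1 - (N - 1))%nat with O by lia; auto).
  assert (phlt : forall s, (1 <= s)%nat -> (s < N)%nat -> 0 < ph s < 1 /\ U (ph s) + e < 1).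
  { intros s h1 h2. unfold ph.
    set (j := (N - 1 - s)%nat).
    assert (hj : (j < N - 1)%nat) by (unfold j; lia).
    assert (b1 : c <= bseq U e c j) by (apply (bseq_ge U D e hU hc he); lra).
    assert (b2 : bseq U e c j < 1) by (rewrite <- hbc; apply (bseq_mono U D e hU hc he); lia || lra).
    assert (b3 : bseq U e c (S j) <= 1).
    { rewrite <- hbc. destruct (Nat.eq_dec (S j) (N - 1)). rewrite e0; lra.
      left. apply (bseq_mono U D e hU hc he); [lra | lia]. }
    simpl in b3.
    destruct (Hf_spec U D e hU hc he (bseq U e c j) ltac:(lra)) as [h3 h4].
    split. lra. rewrite <- h4. rewrite <- (U1 U D hU). apply (U_incr U D hU); auto. lra. }
  assert (phstep : forall s, (1 <= s)%nat -> (s < N)%nat -> Hf U e (ph s) + c = ph (s - 1)%nat).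
  { intros s h1 h2. unfold ph. replace (N - 1 - (s - 1))%nat with (S (N - 1 - s)) by lia. reflexivity. }
  set (fs := fsq N r).
  set (x0 := fun i => ph (rk N r O i)).
  assert (T : forall k i, (i < N)%nat -> traj U e fs x0 k i = ph (rk N r k i)).
  { induction k; intros i hi. reflexivity.
    assert (tau : qmap U e (fs k) (traj U e fs x0 k) (fs (S k)) = 1 - c).
    { destruct (Nat.eq_dec N 1).
      - assert (fs (S k) = fs k). { assert (a := fsq_lt N r hr (S k)). assert (b := fsq_lt N r hr k). unfold fs. lia. }
        unfold qmap. rewrite H, Nat.eqb_refl. subst N. simpl in hbc. lra.
      - assert (hn : rk N r k (fs (S k)) = 1%nat) by (apply rk_next; lia).
        assert (hne : fs (S k) <> fs k).
        { intro h. rewrite h in hn. assert (hz := proj2 (rk_zero N r hr k (fs k) (fsq_lt N r hr k)) eq_refl).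
          unfold fs in hn, hz. lia. }
        unfold qmap. destruct (Nat.eqb_spec (fs (S k)) (fs k)); [tauto|].
        rewrite IHk by (apply fsq_lt; auto). rewrite hn.
        assert (Hs := phstep 1%nat ltac:(lia) ltac:(lia)). simpl in Hs. rewrite ph0 in Hs. lra. }
    simpl. unfold stepm. rewrite tau. rewrite (rk_step N r hr k i hi).
    unfold qmap. destruct (Nat.eqb_spec i (fs k)).
    - assert (rk N r k i = 0%nat) by (apply rk_zero; auto). rewrite H. simpl. rewrite phN. ring.
    - assert (rk N r k i <> 0%nat) by (rewrite rk_zero; auto).
      destruct (Nat.eqb_spec (rk N r k i) 0); [tauto|].
      rewrite IHk by auto. assert (a := rk_lt N r hr k i hi).
      rewrite <- (phstep (rk N r k i)) by lia. ring. }
  assert (G : forall k, Good N U e (traj U e fs x0 k) (fs k)).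
  { intros k. split. apply fsq_lt; auto. split.
    - rewrite T by (apply fsq_lt; auto). replace (rk N r k (fs k)) with O. auto.
      symmetry. apply rk_zero; auto. apply fsq_lt; auto.
    - intros i hi hik. rewrite T by auto.
      assert (rk N r k i <> 0%nat) by (rewrite rk_zero; auto).
      assert (a := rk_lt N r hr k i hi).
      destruct (phlt (rk N r k i)) as [b1 b2]; try lia. split; auto. lra. }
  assert (hU1 := U1 U D hU).
  assert (SEM : forall k i, (i < N)%nat -> (in_aval N (homog e) U (traj U e fs x0 k) i <-> i = fs k)).
  { intros k i hi. destruct (G k) as [a [b g]].
    apply (sem N e U _ (fs k) a b hU1); auto.
    intros j hj hjk. destruct (g j hj hjk) as [[p1 p2] p3]. auto. }
  assert (fs0 : fs O = r) by reflexivity.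
  assert (fsN : fs N = r) by (apply fsq_N; auto).
  exists x0. split.
  - split.
    + intros i hi. change (0 <= traj U e fs x0 O i <= 1). destruct (G O) as [a [b g]].
      destruct (Nat.eq_dec i (fs O)) as [->|n]. lra. destruct (g i hi n). lra.
    + change (in_aval N (homog e) U (traj U e fs x0 O) r). apply SEM; auto.
  - exists N, (traj U e fs x0), (fun k => qmap U e (fs k) (traj U e fs x0 k)). split.
    + split. lia. split. reflexivity. split.
      * intros k hk. split. apply (event_ok N U D e Rf); auto.
        change (flow N (qmap U e (fs k) (traj U e fs x0 k)) (stepm U e (fs k) (fs (S k)) (traj U e fs x0 k))).
        apply (flow_ok N U D e); auto. apply (G (S k)).
      * split. apply SEM; auto.
        intros k h1 h2 hin. apply (fsq_ne N r hr k h1 h2). symmetry. apply SEM; auto.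
    + split.
      * intros i hi. rewrite T by auto. unfold x0, rk. change (fsq N r N) with (fs N). rewrite fsN. reflexivity.
      * intros k hk. exists (fs k). split. apply fsq_lt; auto. intros i hi. apply SEM; auto.
Qed.

Theorem mainTheorem4 (N : nat) (e : R) (U : R -> R) (D : nat -> R -> R) (Rf : R -> R)
  (hN : (1 <= N)%nat) (he : 0 < e) (heN : INR (N - 1) * e < 1)
  (hU : is_rise_function U D) (hconv : forall x, 0 <= x -> 0 < D 2%nat x)
  (hR : is_partial_reset Rf) (hRn : is_neuronal Rf) :
  forall r : nat, (r < N)%nat ->
    (exists x : state, splay_state N (homog e) U Rf r x) /\
    (forall x : state, splay_state N (homog e) U Rf r x ->
       linearly_stable N (homog e) U Rf r x).
Proof.
  intros r hr. split.
  - apply (exist_splay N U D e Rf r hU hconv he hR hN heN hr).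
  - intros x hx. apply (stable N U D e Rf r x hU hconv he hR hr hx).
Qed.
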